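(* For finite abstract simplicial complexes $G,H$, let $g=L_{G\times H}^{-1}$. Then $\sum_{X,Y\in G\times H}g(X,Y)=\chi(G\times H)$, where $\chi(G\times H)=\sum_{(x,y)\in G\times H}(-1)^{\dim(x)+\dim(y)}=\chi(G)\chi(H)$.
   Context: A finite abstract simplicial complex is a finite set of nonempty finite sets closed under taking nonempty subsets; $\dim(x)=|x|-1$ and $\chi(G)=\sum_{x\in G}(-1)^{\dim(x)}$. The connection matrix $L_G$ is indexed by elements of $G$, $L_G(x,y)=1$ if $x\cap y\neq\emptyset$, else $0$; it is known to be invertible (indeed unimodular). $G\times H$ is the set of pairs $(x,y)$, $x\in G$, $y\in H$, with connection matrix $L_{G\times H}((x,y),(a,b))=1$ if $x\cap a\ne\emptyset$ and $y\cap b\neq\emptyset$, else $0$; it equals the Kronecker product $L_G\otimes L_H$ and hence is invertible. *)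

(* Defs.v *)
From HB Require Import structures.
From mathcomp Require Import all_boot all_order all_algebra.
Set Implicit Arguments. Unset Strict Implicit. Unset Printing Implicit Defensive.
Import GRing.Theory Num.Theory.
Local Open Scope ring_scope.

Definition is_complex (V : finType) (G : {set {set V}}) : Prop :=
  set0 \notin G /\
  (forall x y : {set V}, x \in G -> y \subset x -> y != set0 -> y \in G).

Definition sgn_dim (V : finType) (x : {set V}) : rat := (-1) ^+ (#|x|.-1).

Definition euler_char (V : finType) (G : {set {set V}}) : rat :=
  \sum_(x in G) sgn_dim x.

Definition prod_cplx (V W : finType) (G : {set {set V}}) (H : {set {set W}})
  : {set {set V} * {set W}} := setX G H.

Definition euler_char_prod (V W : finType) (G : {set {set V}}) (H : {set {set W}}) : rat :=
  \sum_(p in prod_cplx G H) (-1) ^+ (#|p.1|.-1 + #|p.2|.-1).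

Definition conn_prod (V W : finType) (G : {set {set V}}) (H : {set {set W}})
  : 'M[rat]_#|prod_cplx G H| :=
  \matrix_(i, j)
    let X := enum_val i in let Y := enum_val j in
    if (X.1 :&: Y.1 != set0) && (X.2 :&: Y.2 != set0) then 1 else 0.

(* Main.v *)
Require Import Defs.
From HB Require Import structures.
From mathcomp Require Import all_boot all_order all_algebra ring lra.
Set Implicit Arguments. Unset Strict Implicit.
Import GRing.Theory Num.Theory.
Local Open Scope ring_scope.

Definition sig (T : finType) (x : {set T}) : rat := (-1) ^+ #|x|.
Definition tog (T : finType) (b : T) (x : {set T}) :=
  if b \in x then x :\ b else b |: x.

Lemma togK (T : finType) (b : T) : involutive (tog b).
Proof.
move=> x; rewrite /tog; case: (boolP (b \in x)) => hb.
  by rewrite setD11 setD1K.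
by rewrite setU11 setU1K.
Qed.

Lemma sig_tog (T : finType) (b : T) x : sig (tog b x) = - sig x.
Proof.
rewrite /sig /tog; case: (boolP (b \in x)) => hb.
  by rewrite (cardsD1 b x) hb add1n exprS mulN1r opprK.
by rewrite cardsU1 hb add1n exprS mulN1r.
Qed.

Lemma tog_sum0 (T : finType) (b : T) (P : pred {set T}) :
  (forall x, P (tog b x) = P x) -> \sum_(x | P x) sig x = 0.
Proof.
move=> hP.
have h : \sum_(x | P x) sig x = - \sum_(x | P x) sig x.
  rewrite {1}(reindex_inj (can_inj (togK b))) /=.
  rewrite -sumrN; apply: eq_big => x; first by rewrite hP.
  by move=> _; rewrite sig_tog.
have : 2%:R * \sum_(x | P x) sig x = 0.
  by rewrite mulr2n mulrDl mul1r {1}h addNr.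
by move/eqP; rewrite mulf_eq0 pnatr_eq0 /= => /eqP.
Qed.

Lemma sum_sub (T : finType) (s : {set T}) :
  \sum_(x : {set T} | x \subset s) sig x = (s == set0)%:R.
Proof.
case: (set_0Vmem s) => [->|[b hb]].
  rewrite eqxx (big_pred1 set0); first by rewrite /sig cards0.
  by move=> x /=; rewrite subset0.
have -> : (s == set0) = false by apply/negbTE/set0Pn; exists b.
apply: (tog_sum0 (b := b)) => x; rewrite /tog.
case: (boolP (b \in x)) => hx.
  apply/idP/idP => h; last by apply: subset_trans h; apply: subD1set.
  by rewrite -(setD1K hx) subUset sub1set hb h.
by rewrite subUset sub1set hb.
Qed.

Lemma sum_interval (T : finType) (a w : {set T}) :
  \sum_(z : {set T} | (a \subset z) && (z \subset w)) sig z = (a == w)%:R * sig a.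
Proof.
case: (eqVneq a w) => [<-|neq].
  rewrite mul1r (big_pred1 a) // => z /=.
  by rewrite eq_sym eqEsubset andbC.
rewrite mul0r.
case: (boolP (a \subset w)) => aw; last first.
  rewrite big_pred0 // => z; apply/negbTE/negP => /andP[h1 h2].
  by rewrite (subset_trans h1 h2) in aw.
have : a \proper w by rewrite properEneq neq aw.
case/properP => _ [b hbw hba].
apply: (tog_sum0 (b := b)) => x; rewrite /tog.
case: (boolP (b \in x)) => hx.
  apply/andP/andP => -[h1 h2]; split.
  - by rewrite -(setD1K hx) subsetU // orbC h1.
  - by rewrite -(setD1K hx) subUset sub1set hbw h2.
  - apply/subsetP => y hy; rewrite in_setD1 (subsetP h1 y hy) andbT.
    by apply/eqP => e; rewrite -e hy in hba.
  - by apply: subset_trans h2; apply: subD1set.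
apply/andP/andP => -[h1 h2]; split.
- apply/subsetP => y hy; have := subsetP h1 y hy; rewrite in_setU1.
  case/orP => // /eqP e; by rewrite -e hy in hba.
- by apply: subset_trans h2; rewrite subsetUr.
- exact: subset_trans h1 (subsetUr _ _).
- by rewrite subUset sub1set hbw h2.
Qed.

Definition gC (V : finType) (G : {set {set V}}) (x a : {set V}) : rat :=
  - (sig x * sig a * \sum_(z in G | (x \subset z) && (a \subset z)) sig z).

Lemma sigK (T : finType) (x : {set T}) : sig x * sig x = 1.
Proof. by rewrite /sig -exprD -signr_odd oddD addbb. Qed.

Lemma inner_sum (T : finType) (z w : {set T}) : z != set0 ->
  \sum_(x : {set T} | (x \subset z) && (w :&: x != set0)) sig x = - (z \subset w)%:R.
Proof.
move=> nz.
have := sum_sub z; rewrite (negbTE nz) (bigID (fun x => w :&: x != set0)) /=.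
have -> : \sum_(i : {set T} | (i \subset z) && ~~ (w :&: i != set0)) sig i =
          \sum_(i : {set T} | i \subset z :\: w) sig i.
  apply: eq_bigl => x; rewrite negbK subsetD setIC setI_eq0 disjoint_sym //.
rewrite sum_sub setD_eq0 => /eqP; rewrite addr_eq0 => /eqP //.
Qed.

Lemma inv_row (V : finType) (G : {set {set V}}) (hG : is_complex G) (w a : {set V}) :
  w \in G -> a \in G ->
  \sum_(x in G) (if w :&: x != set0 then 1 else 0) * gC G x a = (w == a)%:R.
Proof.
case: hG => G0 GC wG aG.
have nz : forall y, y \in G -> y != set0.
  by move=> y yG; apply/eqP => e; rewrite -e yG in G0.
transitivity (\sum_(x in G) \sum_(z | (z \in G) && (x \subset z) && (a \subset z))
   - (sig a * (sig z * ((if w :&: x != set0 then 1 else 0) * sig x)))).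
  apply: eq_bigr => x _; rewrite /gC mulrN !mulr_sumr -sumrN.
  by apply: eq_big => [z|z _]; [rewrite andbA | ring].
rewrite (exchange_big_dep (fun z => (z \in G) && (a \subset z))); last first.
  by move=> x z _ /andP[/andP[-> _] ->].
transitivity (\sum_(z | (z \in G) && (a \subset z)) - (sig a * (sig z * - (z \subset w)%:R))).
  apply: eq_bigr => z /andP[zG az].
  rewrite sumrN -mulr_sumr -mulr_sumr -(inner_sum w (nz z zG)); congr (- (_ * (_ * _))).
  rewrite big_mkcond [RHS]big_mkcond; apply: eq_bigr => x _.
  case: (boolP (x \subset z)) => xz; rewrite ?andbF ?andbT ?zG ?az /=; last first.
    by [].
  rewrite andbT; case: (boolP (w :&: x != set0)) => wx; rewrite ?mul0r ?mul1r ?if_same //.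
  have -> : x \in G; last by [].
  apply: GC xz _ => //; apply/eqP => e; rewrite e setI0 in wx; by rewrite eqxx in wx.
transitivity (sig a * \sum_(z : {set V} | (a \subset z) && (z \subset w)) sig z).
  rewrite mulr_sumr [RHS]big_mkcond [LHS]big_mkcond; apply: eq_bigr => z _.
  case: (boolP (a \subset z)) => az; rewrite ?andbF ?andbT //=.
  case: (boolP (z \subset w)) => zw /=.
    have -> : z \in G.
      apply: GC wG zw _; apply/eqP => e; move: az; rewrite e subset0 => /eqP ea.
      by move: (nz a aG); rewrite ea eqxx.
    ring.
  by case: (z \in G); rewrite // oppr0 mulr0 mulr0 oppr0.
rewrite sum_interval mulrCA sigK mulr1 eq_sym //.
Qed.

Lemma sum_setX (V W : finType) (G : {set V}) (H : {set W}) (F : V * W -> rat) :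
  \sum_(q in setX G H) F q = \sum_(x in G) \sum_(y in H) F (x, y).
Proof.
rewrite pair_big /=; apply: eq_big => [[x y]|[x y] _] //; by rewrite in_setX.
Qed.

Lemma sum_sub_nz (V : finType) (G : {set {set V}}) (hG : is_complex G) z :
  z \in G -> \sum_(x in G | x \subset z) sig x = -1.
Proof.
case: hG => G0 GC zG.
have := sum_sub z.
have -> : (z == set0) = false by apply/negbTE/eqP => e; rewrite -e zG in G0.
rewrite (bigD1 set0) ?sub0set //= /sig cards0 expr0 /= => h.
transitivity (\sum_(i : {set V} | (i \subset z) && (i != set0)) (-1) ^+ #|i| : rat); last lra.
apply: eq_bigl => x; apply/andP/andP => -[h1 h2]; split => //.
  by apply/eqP => e; rewrite -e h1 in G0.
by apply: GC zG h1 h2.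
Qed.

Lemma sgn_dimE (V : finType) (x : {set V}) : x != set0 -> sgn_dim x = - sig x.
Proof.
move=> nz; rewrite /sgn_dim /sig.
have : (0 < #|x|)%N by rewrite card_gt0.
case: #|x| => // n _ /=; by rewrite exprS mulN1r opprK.
Qed.

Lemma gC_sum (V : finType) (G : {set {set V}}) (hG : is_complex G) :
  \sum_(x in G) \sum_(a in G) gC G x a = euler_char G.
Proof.
have G0 : set0 \notin G by case: hG.
pose h (z x : {set V}) := if (x \in G) && (x \subset z) then sig x else 0.
pose K (z x a : {set V}) := if z \in G then - (sig z * h z x * h z a) else 0.
transitivity (\sum_x \sum_a \sum_z K z x a).
  rewrite [LHS]big_mkcond; apply: eq_bigr => x _.
  case: (boolP (x \in G)) => xG /=; last first.
    rewrite big1 // => a _; rewrite big1 // => z _; rewrite /K /h (negbTE xG) /=. by case: (z \in G) => //=; ring.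
  rewrite [LHS]big_mkcond; apply: eq_bigr => a _.
  case: (boolP (a \in G)) => aG /=; last first.
    by rewrite big1 // => z _; rewrite /K /h (negbTE aG) /=; case: (z \in G) => //=; ring.
  rewrite /gC mulr_sumr -sumrN big_mkcond; apply: eq_bigr => z _.
  rewrite /K /h xG aG /=; case: (z \in G) => //=.
  case: (x \subset z); case: (a \subset z) => /=; ring.
under eq_bigr do rewrite exchange_big.
rewrite exchange_big /euler_char [RHS]big_mkcond; apply: eq_bigr => z _.
rewrite /K; case: (boolP (z \in G)) => zG; last by rewrite big1 // => x _; rewrite big1.
have hs : \sum_x h z x = -1.
  by rewrite -(sum_sub_nz hG zG) [RHS]big_mkcond; apply: eq_bigr => x _; rewrite /h andbC.
transitivity (- (sig z * (\sum_x h z x) * (\sum_x h z x))).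
  rewrite -mulrA big_distrlr /= mulr_sumr -sumrN; apply: eq_bigr => x _.
  by rewrite mulr_sumr -sumrN; apply: eq_bigr => a _; rewrite ?zG; ring.
rewrite hs sgn_dimE; last by apply/eqP => e; rewrite -e zG in G0.
ring.
Qed.

Theorem mainTheorem14 (V W : finType) (G : {set {set V}}) (H : {set {set W}}) :
  is_complex G -> is_complex H ->
  (\sum_(i < #|prod_cplx G H|) \sum_(j < #|prod_cplx G H|)
      invmx (conn_prod G H) i j = euler_char_prod G H)
  /\ euler_char_prod G H = euler_char G * euler_char H.
Proof.
move=> hG hH.
set P := prod_cplx G H.
have hE : euler_char_prod G H = euler_char G * euler_char H.
  rewrite /euler_char_prod /euler_char sum_setX big_distrlr /=.
  apply: eq_bigr => x _; apply: eq_bigr => y _; by rewrite exprD.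
split => //.
pose M : 'M[rat]_#|P| := \matrix_(i, j)
   (gC G (enum_val i).1 (enum_val j).1 * gC H (enum_val i).2 (enum_val j).2).
have hLM : conn_prod G H *m M = 1%:M.
  apply/matrixP => i k; rewrite !mxE.
  have pP : enum_val i \in P := enum_valP i.
  have rP : enum_val k \in P := enum_valP k.
  move: pP rP; rewrite /P /prod_cplx.
  case eP: (enum_val i) => [p1 p2]; case eR: (enum_val k) => [r1 r2].
  rewrite !in_setX => /andP[p1G p2H] /andP[r1G r2H].
  pose F (q : {set V} * {set W}) :=
    (if (p1 :&: q.1 != set0) && (p2 :&: q.2 != set0) then 1 else 0) *
    (gC G q.1 r1 * gC H q.2 r2).
  transitivity (\sum_(j < #|P|) F (enum_val j)).
    by apply: eq_bigr => j _; rewrite !mxE eP eR.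
  rewrite -(big_enum_val F) /P /prod_cplx sum_setX.
  transitivity ((\sum_(x in G) (if p1 :&: x != set0 then 1 else 0) * gC G x r1) *
                (\sum_(y in H) (if p2 :&: y != set0 then 1 else 0) * gC H y r2)).
    rewrite big_distrlr /=; apply: eq_bigr => x _; apply: eq_bigr => y _.
    rewrite /F /=; case: (p1 :&: x != set0); case: (p2 :&: y != set0) => /=; ring.
  rewrite !inv_row // -natrM mulnb.
  have -> : ((p1 == r1) && (p2 == r2)) = (i == k).
    by rewrite -(inj_eq enum_val_inj) eP eR xpair_eqE.
  by [].
have Lu : conn_prod G H \in unitmx by case: (mulmx1_unit hLM).
have -> : invmx (conn_prod G H) = M.
  by rewrite -[LHS]mulmx1 -hLM mulKmx.
transitivity (\sum_(p in P) \sum_(q in P) (gC G p.1 q.1 * gC H p.2 q.2)).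
  rewrite [RHS]big_enum_val; apply: eq_bigr => i _.
  rewrite [RHS]big_enum_val; apply: eq_bigr => j _.
  by rewrite mxE.
rewrite hE -!gC_sum //.
rewrite /P /prod_cplx sum_setX big_distrlr /=; apply: eq_bigr => x _.
under eq_bigr do rewrite sum_setX.
apply: eq_bigr => y _; rewrite mulr_suml; apply: eq_bigr => a _.
by rewrite mulr_sumr.
Qed.
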